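(* Assume all deadlines are positive integers. For every $\bar d\in\mathcal D$ and every integer $q$ with $1\le q\le\lfloor \bar d/2\rfloor$, define $\mathcal K_1(\bar d,q)=\{k\in\mathcal K(\bar d): t_k>\bar d-q\}$ and $\mathcal K_2(\bar d,q)=\{k\in\mathcal K(\bar d): q\le t_k\le\bar d-q\}$. Then for every feasible solution $(\rho_{kp})$ of $B(\mathcal K)$, the vector $\rho_k=\sum_{p\in\mathcal P}\rho_{kp}$ satisfies $$\sum_{k\in\mathcal K_1(\bar d,q)}\bar d\,\rho_k+\sum_{k\in\mathcal K_2(\bar d,q)}t_k\,\rho_k\le \bar d\,|\mathcal P|.$$
   Context: Let $\mathcal O$ be a finite set of orders, each order $o\in\mathcal O$ having a deadline $\bar d_o>0$; let $\mathcal D=\{\bar d_o: o\in\mathcal O\}$ be the set of distinct deadlines and let $\mathcal P$ be a finite nonempty set of pickers. Let $\mathcal K$ be a finite set of routes; each route $k\in\mathcal K$ has a nonempty batch of orders $\mathcal O_k\subseteq\mathcal O$ and a duration $t_k>0$, and its deadline is $\bar d_k=\min_{o\in\mathcal O_k}\bar d_o$. Write $\mathcal K(o)=\{k\in\mathcal K: o\in\mathcal O_k\}$ and $\mathcal K(\bar d)=\{k\in\mathcal K:\bar d_k\le\bar d\}$. Formulation $B(\mathcal K)$: binary variables $\rho_{kp}\in\{0,1\}$ ($k\in\mathcal K,p\in\mathcal P$); minimize $\sum_{k\in\mathcal K}t_k\sum_{p\in\mathcal P}\rho_{kp}$ subject to $\sum_{k\in\mathcal K(o)}\sum_{p\in\mathcal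 P}\rho_{kp}\ge 1$ for all $o\in\mathcal O$, and $\sum_{k\in\mathcal K(\bar d)}t_k\rho_{kp}\le\bar d$ for all $\bar d\in\mathcal D$, $p\in\mathcal P$. *)

(* Defs.v *)
From mathcomp Require Import all_boot all_order all_algebra.
Set Implicit Arguments. Unset Strict Implicit. Unset Printing Implicit Defensive.
Import Order.TTheory GRing.Theory Num.Theory.
Local Open Scope ring_scope.

Section Defs.
Variables (R : realFieldType) (O K P : finType).
Variables (d : O -> nat) (Ok : K -> {set O}) (t : K -> R).

(* deadline of a route: min over its (nonempty) batch; the big-op identity
   (max of all deadlines) is irrelevant when the batch is nonempty *)
Definition route_deadline (k : K) : nat :=
  \big[minn/ (\max_(o : O) d o)%N]_(o in Ok k) d o.

Definition in_deadlines (dbar : nat) : Prop := exists o : O, d o = dbar.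

Definition inKd (dbar : nat) (k : K) : bool := (route_deadline k <= dbar)%N.

Definition feasibleB (rho : K -> P -> bool) : Prop :=
  (forall o : O, (1 <= \sum_(k : K | o \in Ok k) \sum_(p : P) (rho k p : nat))%N) /\
  (forall dbar : nat, in_deadlines dbar -> forall p : P,
      \sum_(k : K | inKd dbar k) t k * (rho k p : nat)%:R <= dbar%:R).

Definition rho_agg (rho : K -> P -> bool) (k : K) : R :=
  \sum_(p : P) (rho k p : nat)%:R.
End Defs.
Arguments rho_agg R {K P} rho k.

(* Main.v *)
Require Import Defs.
From mathcomp Require Import all_boot all_order all_algebra.
From mathcomp Require Import zify lra.
Import Order.TTheory GRing.Theory Num.Theory.
Local Open Scope ring_scope.

Lemma sub_le (R : realFieldType) (K : finType) (A B : pred K) (F : K -> R) :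
  (forall k, A k -> B k) -> (forall k, B k -> 0 <= F k) ->
  \sum_(k | A k) F k <= \sum_(k | B k) F k.
Proof.
move=> AB F0; rewrite [X in _ <= X](bigID A) /=.
have -> : \sum_(k | B k && A k) F k = \sum_(k | A k) F k.
  by apply: eq_bigl => k; case Ak: (A k); rewrite ?andbT ?andbF // AB.
rewrite lerDl; apply: sumr_ge0 => k /andP[/F0 //].
Qed.

Theorem proposition4 (R : realFieldType) (O K P : finType)
  (d : O -> nat) (Ok : K -> {set O}) (t : K -> R)
  (hd : forall o, (0 < d o)%N)
  (hOk : forall k, Ok k != set0)
  (ht : forall k, 0 < t k)
  (hP : (0 < #|P|)%N)
  (rho : K -> P -> bool)
  (hfeas : feasibleB d Ok t rho)
  (dbar : nat) (hdbar : in_deadlines d dbar)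
  (q : nat) (hq1 : (1 <= q)%N) (hq2 : (q <= dbar %/ 2)%N) :
  \sum_(k : K | inKd d Ok dbar k && (dbar%:R - q%:R < t k))
      dbar%:R * rho_agg R rho k
  + \sum_(k : K | inKd d Ok dbar k && (q%:R <= t k <= dbar%:R - q%:R))
      t k * rho_agg R rho k
  <= dbar%:R * #|P|%:R.
Proof.
set A := fun k => inKd d Ok dbar k && (dbar%:R - q%:R < t k).
set B := fun k => inKd d Ok dbar k && (q%:R <= t k <= dbar%:R - q%:R).
set D : R := dbar%:R.
set r := fun k p => ((rho k p : nat)%:R : R).
have r01 : forall k p, r k p = if rho k p then 1 else 0.
  by move=> k p; rewrite /r; case: (rho k p).
have hq2R : (q%:R : R) *+ 2 <= D.
  rewrite /D -mulrnA ler_nat.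
  have := leq_trunc_div dbar 2; lia.
have hqR : (1 : R) <= q%:R by rewrite ler1n.
have cap : forall p, \sum_(k | inKd d Ok dbar k) t k * r k p <= D.
  by move=> p; case: hfeas => _ /(_ dbar hdbar p).
have two : forall p k1 k2, k1 != k2 -> inKd d Ok dbar k1 -> inKd d Ok dbar k2 ->
    rho k1 p -> rho k2 p -> t k1 + t k2 <= D.
  move=> p k1 k2 ne i1 i2 h1 h2; apply: le_trans (cap p).
  rewrite (bigD1 k1) //= (bigD1 k2) /=; last by rewrite i2 eq_sym.
  rewrite !r01 h1 h2 !mulr1 addrA lerDl; apply: sumr_ge0 => k _.
  by rewrite r01; case: (rho k p); rewrite ?mulr1 ?mulr0 // ltW.
have perp : forall p, \sum_(k | A k) D * r k p + \sum_(k | B k) t k * r k p <= D.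
  move=> p.
  case: (pickP (fun k => A k && rho k p)) => [k1 /andP[Ak1 rk1] | none].
    have oth : forall k, k != k1 -> (A k || B k) -> rho k p = false.
      move=> k ne hAB; apply/negP => rk.
      have ik : inKd d Ok dbar k by case/orP: hAB => /andP[].
      have := two p k1 k (_ : k1 != k) (proj1 (andP Ak1)) ik rk1 rk.
      move=> /(_ ltac:(by rewrite eq_sym)); move: Ak1 => /andP[_ h1].
      case/orP: hAB => /andP[_ h]; [lra|].
      move: h => /andP[h _]; lra.
    rewrite (bigD1 k1) //= r01 rk1 mulr1 big1 ?addr0; last first.
      by move=> k /andP[Ak ne]; rewrite r01 (oth k ne) ?Ak ?mulr0.
    rewrite big1 ?addr0 // => k Bk.
    case: (eqVneq k k1) => [ek|ne].
      move: Bk Ak1; rewrite ek => /andP[_ /andP[_ h]] /andP[_ h']; lra.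
    by rewrite r01 (oth k ne) ?Bk ?orbT ?mulr0.
  rewrite big1 ?add0r; last first.
    by move=> k Ak; move: (none k); rewrite Ak /= r01 => ->; rewrite mulr0.
  apply: le_trans (cap p); apply: sub_le => [k /andP[] //|k _].
  by rewrite r01; case: (rho k p); rewrite ?mulr1 ?mulr0 // ltW.
rewrite /rho_agg.
under eq_bigr do rewrite mulr_sumr.
under [X in _ + X <= _]eq_bigr do rewrite mulr_sumr.
rewrite (exchange_big _ _ _ A) (exchange_big _ _ _ B) /= -big_split /=.
rewrite mulr_natr -sumr_const.
by apply: ler_sum => p _; apply: perp.
Qed.
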